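(* There is no polynomial-time algorithm that, given a canonical linear game on players $\{1,\dots,n\}$ as the list of characteristic vectors of its ceiling coalitions, outputs the list of its roof coalitions; and there is no polynomial-time algorithm that, given a canonical linear game as the list of its roof coalitions, outputs the list of its ceiling coalitions. (Here polynomial time means polynomial in the size of the input list.)
   Context: A simple game on $N=\{1,\dots,n\}$ is a map $v:2^N\to\{0,1\}$; it is monotonic if $S\subseteq T\Rightarrow v(S)\le v(T)$. Write $i\succeq j$ if $v(S\cup\{i\})\ge v(S\cup\{j\})$ for all $S\subseteq N\setminus\{i,j\}$; a canonical linear game is a monotonic simple game with $1\succeq2\succeq\cdots\succeq n$. A coalition $S'$ is a direct left-shift of $S$ if there is $m\in S$, $2\le m\le n$, $m-1\notin S$, with $S'=(S\setminus\{m\})\cup\{m-1\}$; a left-shift is obtained by one or more successive direct left-shifts; right-shifts are defined symmetrically. A roof coalition is a minimal winning coalition all of whose right-shifts are losing; a ceiling coalition is a maximal losing coalition all of whose left-shifts are winning. A canonical linear game is determined by its list of roofs, and also by its list of ceilings. A coalition $S$ is encoded by its characteristic vector in $\{0,1\}^n$. *)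

(* Defs.v *)
From mathcomp Require Import all_boot.
Set Implicit Arguments. Unset Strict Implicit. Unset Printing Implicit Defensive.

(* Simple games on N = {1,..,n}; player i is represented by the ordinal
   i-1 : 'I_n, so the order 1,2,...,n is the order of 'I_n.            *)

Definition monotonic_game n (v : {set 'I_n} -> bool) : Prop :=
  forall S T : {set 'I_n}, S \subset T -> v S <= v T.

Definition desirable n (v : {set 'I_n} -> bool) (i j : 'I_n) : Prop :=
  forall S : {set 'I_n}, S \subset ~: [set i; j] ->
    v (j |: S) <= v (i |: S).

Definition canonical_linear_game n (v : {set 'I_n} -> bool) : Prop :=
  monotonic_game v /\ forall i j : 'I_n, i <= j -> desirable v i j.

Definition direct_left_shift n (S S' : {set 'I_n}) : bool :=
  [exists m : 'I_n, exists m' : 'I_n,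
    [&& m'.+1 == m :> nat, m \in S, m' \notin S & S' == m' |: (S :\ m)]].

Definition direct_right_shift n (S S' : {set 'I_n}) : bool :=
  [exists m : 'I_n, exists m' : 'I_n,
    [&& m.+1 == m' :> nat, m \in S, m' \notin S & S' == m' |: (S :\ m)]].

Definition left_shift n (S S' : {set 'I_n}) : Prop :=
  exists T : {set 'I_n}, direct_left_shift S T /\ connect (@direct_left_shift n) T S'.
Definition right_shift n (S S' : {set 'I_n}) : Prop :=
  exists T : {set 'I_n}, direct_right_shift S T /\ connect (@direct_right_shift n) T S'.

Definition minimal_winning n (v : {set 'I_n} -> bool) (S : {set 'I_n}) : Prop :=
  v S /\ forall T : {set 'I_n}, T \proper S -> ~~ v T.
Definition maximal_losing n (v : {set 'I_n} -> bool) (S : {set 'I_n}) : Prop :=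
  ~~ v S /\ forall T : {set 'I_n}, S \proper T -> v T.

Definition roof n (v : {set 'I_n} -> bool) (S : {set 'I_n}) : Prop :=
  minimal_winning v S /\ forall S' : {set 'I_n}, right_shift S S' -> ~~ v S'.
Definition ceiling n (v : {set 'I_n} -> bool) (S : {set 'I_n}) : Prop :=
  maximal_losing v S /\ forall S' : {set 'I_n}, left_shift S S' -> v S'.

(* A machine has states 'I_q.+1 (start state ord0) and tape alphabet
   'I_k.+4, where 0 = blank, 1 = bit '0', 2 = bit '1', 3 = separator.
   delta st a = None means "halt"; Some (st', w, mv) writes w, enters
   st' and moves right if mv, left otherwise.                          *)

Section TM.
Variables q k : nat.
Definition sym := 'I_k.+4.
Definition blank : sym := ord0.
Definition bit0 : sym := inord 1.
Definition bit1 : sym := inord 2.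
Definition sepr : sym := inord 3.

Definition tm_delta := 'I_q.+1 -> sym -> option ('I_q.+1 * sym * bool).

(* configuration: state, left part (reversed), scanned cell, right part *)
Definition config := ('I_q.+1 * seq sym * sym * seq sym)%type.

Definition tm_step (delta : tm_delta) (cf : config) : option config :=
  let: (st, l, c, r) := cf in
  match delta st c with
  | None => None
  | Some (st', w, mv) =>
      Some (if mv then (st', w :: l, head blank r, behead r)
            else (st', behead l, head blank l, w :: r))
  end.

(* run with fuel: Some cf iff the machine halts in configuration cf after
   fewer than fuel steps *)
Fixpoint tm_run (delta : tm_delta) (fuel : nat) (cf : config) : option config :=
  match fuel with
  | 0 => None
  | f.+1 => match tm_step delta cf with
            | None => Some cf
            | Some cf' => tm_run delta f cf'
            end
  end.

Definition tm_init (w : seq sym) : config := (ord0, [::], head blank w, behead w).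

Definition drop_blanks (s : seq sym) := drop (find (fun x => x != blank) s) s.
Definition strip_blanks (s : seq sym) := rev (drop_blanks (rev (drop_blanks s))).

Definition tm_output (cf : config) : seq sym :=
  let: (_, l, c, r) := cf in strip_blanks (rev l ++ c :: r).

Definition enc_set n (S : {set 'I_n}) : seq sym :=
  [seq (if i \in S then bit1 else bit0) | i <- enum 'I_n] ++ [:: sepr].
Definition enc_list n (s : seq {set 'I_n}) : seq sym :=
  flatten [seq enc_set X | X <- s].
Definition enc_input n (s : seq {set 'I_n}) : seq sym :=
  nseq n bit1 ++ sepr :: enc_list s.

Definition poly_time_converts
    (inP outP : forall n, ({set 'I_n} -> bool) -> {set 'I_n} -> Prop)
    (delta : tm_delta) (c d : nat) : Prop :=
  forall n (v : {set 'I_n} -> bool), canonical_linear_game v ->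
  forall s : seq {set 'I_n}, uniq s -> (forall X, X \in s <-> inP n v X) ->
  exists t, t <= c * (size (enc_input s)).+1 ^ d /\
  exists cf, tm_run delta t.+1 (tm_init (enc_input s)) = Some cf /\
  exists s' : seq {set 'I_n}, uniq s' /\ (forall X, X \in s' <-> outP n v X) /\
    tm_output cf = enc_list s'.
End TM.

(* Main.v *)
Require Import Defs.
From mathcomp Require Import all_boot.
From mathcomp Require Import zify.
From Stdlib Require Import Classical.
Set Implicit Arguments. Unset Strict Implicit. Unset Printing Implicit Defensive.


Section Cnt.
Variable n : nat.
Implicit Types S T g : {set 'I_n}.

Definition ms S (j : nat) : bool := [exists i in S, val i == j].

Lemma ms_ord S (i : 'I_n) : ms S i = (i \in S).
Proof.
apply/existsP/idP => [[i' /andP[H /eqP E]]|H]; last by exists i; rewrite H eqxx.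
by have -> : i = i' by apply: val_inj.
Qed.

Lemma ms_ge S j : n <= j -> ms S j = false.
Proof.
move=> H; apply/existsP => [[i /andP[_ /eqP E]]]; have := ltn_ord i; rewrite -[nat_of_ord i]/(val i) E; lia.
Qed.

Lemma ms_sub S T j : S \subset T -> ms S j -> ms T j.
Proof.
move=> /subsetP H /existsP[i /andP[Hi E]]; apply/existsP; exists i; by rewrite H.
Qed.

Lemma msU1 x S j : ms (x |: S) j = (nat_of_ord x == j) || ms S j.
Proof.
apply/existsP/orP => [[i /andP[]]|].
  rewrite in_setU1 => /orP[/eqP -> E|Hi E]; [by left | right; apply/existsP; exists i; by rewrite Hi E].
case=> [E|/existsP[i /andP[Hi E]]].
  by exists x; rewrite setU11 E.
by exists i; rewrite setU1r ?E.
Qed.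

Lemma msC S j : ms (~: S) j = (j < n) && ~~ ms S j.
Proof.
case: (ltnP j n) => Hj /=; last by rewrite ms_ge.
by rewrite -[j]/(val (Ordinal Hj)) !ms_ord in_setC.
Qed.

Fixpoint cnt S k := match k with 0 => 0 | k'.+1 => cnt S k' + ms S k' end.

Lemma cntS S k : cnt S k.+1 = cnt S k + ms S k. Proof. by []. Qed.

Lemma cnt_mono S k k' : k <= k' -> cnt S k <= cnt S k'.
Proof. elim: k' => [|k' IH]; first by rewrite leqn0 => /eqP->.
rewrite leq_eqVlt => /orP[/eqP->//|H]; rewrite cntS; have := IH H; lia. Qed.

Lemma cnt_lip S k : cnt S k.+1 <= (cnt S k).+1.
Proof. rewrite cntS; case: (ms S k); lia. Qed.

Lemma cnt_lek S k : cnt S k <= k.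
Proof. elim: k => //= k IH; case: (ms S k); lia. Qed.

Definition lec S T := forall k, k <= n -> cnt S k <= cnt T k.

Lemma lec_refl S : lec S S. Proof. by move=> k. Qed.
Lemma lec_trans S T U : lec S T -> lec T U -> lec S U.
Proof. move=> H1 H2 k Hk; exact: leq_trans (H1 k Hk) (H2 k Hk). Qed.

Lemma cnt_ext S T : (forall k, k <= n -> cnt S k = cnt T k) -> S = T.
Proof.
move=> E; apply/setP => i; rewrite -!ms_ord.
have := E i.+1 (ltn_ord i); have := E i (ltnW (ltn_ord i)); rewrite !cntS.
by case: (ms S i); case: (ms T i) => /=; lia.
Qed.

Lemma lec_anti S T : lec S T -> lec T S -> S = T.
Proof. move=> H1 H2; apply: cnt_ext => k Hk; apply/eqP; by rewrite eqn_leq H1 ?H2. Qed.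

Lemma lec_sub S T : S \subset T -> lec S T.
Proof. move=> H k _; elim: k => //= k IH.
have := @ms_sub S T k H; case: (ms S k); case: (ms T k) => //=; lia. Qed.

Lemma cntU1 x S k : x \notin S -> cnt (x |: S) k = cnt S k + (nat_of_ord x < k).
Proof.
move=> Hx; elim: k => [|k IH] /=; first by [].
rewrite IH msU1; case: (eqVneq (nat_of_ord x) k) => [E|NE] /=.
  by subst k; rewrite (ms_ord S x) (negbTE Hx) ltnn leqnn; lia.
by rewrite [x < k.+1]ltnS [x <= k]leq_eqVlt (negbTE NE) /=; lia.
Qed.

Lemma cntD1 x S k : x \in S -> cnt S k = cnt (S :\ x) k + (nat_of_ord x < k).
Proof. move=> Hx; by rewrite -cntU1 ?setD11 // setD1K. Qed.

Lemma cntC S k : k <= n -> cnt (~: S) k + cnt S k = k.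
Proof.
elim: k => //= k IH Hk; rewrite msC Hk /=; have := IH (ltnW Hk).
case: (ms S k) => /=; lia.
Qed.

Lemma lecC S T : lec S T -> lec (~: T) (~: S).
Proof. move=> H k Hk; have := cntC S Hk; have := cntC T Hk; have := H k Hk; lia. Qed.

End Cnt.


Lemma maxP (P : pred nat) m : (exists i, P i) -> (forall i, P i -> i <= m) ->
  exists i, P i /\ forall j, P j -> j <= i.
Proof. move=> e u; case: (ex_maxnP e u) => i Pi Hi; by exists i. Qed.

Lemma b2n_le (a b : bool) : (a -> b) -> (a : nat) <= b.
Proof. by case: a; case: b => // /(_ isT). Qed.

Section Shift.
Variable n : nat.
Implicit Types S T g : {set 'I_n}.

Lemma drs_lec S S' : direct_right_shift S S' -> lec S' S /\ S' != S.
Proof.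
move=> /existsP[m /existsP[m' /and4P[/eqP E Hm Hm' /eqP ->]]]; split.
  move=> k _; rewrite (cntD1 k Hm) cntU1; last by rewrite in_setD1 negb_and Hm' orbT.
  rewrite leq_add2l; apply: b2n_le => h; apply: leq_trans h; rewrite -E; lia.
apply/negP => /eqP EE; have : m \in m' |: (S :\ m) by rewrite EE.
rewrite in_setU1 in_setD1 eqxx andFb orbF => /eqP Em; move: E; rewrite Em; lia.
Qed.

Lemma dls_lec S S' : direct_left_shift S S' -> lec S S' /\ S' != S.
Proof.
move=> /existsP[m /existsP[m' /and4P[/eqP E Hm Hm' /eqP ->]]]; split.
  move=> k _; rewrite (cntD1 k Hm) cntU1; last by rewrite in_setD1 negb_and Hm' orbT.
  rewrite leq_add2l; apply: b2n_le => h; apply: leq_trans h; rewrite -E; lia.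
apply/negP => /eqP EE; have : m' \in m' |: (S :\ m) by rewrite setU11.
by rewrite EE (negbTE Hm').
Qed.

Lemma conn_r T U : connect (@direct_right_shift n) T U -> lec U T.
Proof.
move=> /connectP[p]; elim: p T => [|a p IH] T /=; first by move=> _ ->; apply: lec_refl.
move=> /andP[H1 H2] HU; apply: lec_trans (IH _ H2 HU) (proj1 (drs_lec H1)).
Qed.

Lemma conn_l T U : connect (@direct_left_shift n) T U -> lec T U.
Proof.
move=> /connectP[p]; elim: p T => [|a p IH] T /=; first by move=> _ ->; apply: lec_refl.
move=> /andP[H1 H2] HU; apply: lec_trans (proj1 (dls_lec H1)) (IH _ H2 HU).
Qed.

Lemma rs_lec S S' : right_shift S S' -> lec S' S /\ S' != S.
Proof.
move=> [T [H1 H2]]; have [L1 N1] := drs_lec H1; have L2 := conn_r H2.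
split; first exact: lec_trans L2 L1.
apply/eqP => E; move: L2; rewrite E => L2; move/eqP: N1; apply; exact: lec_anti.
Qed.

Lemma ls_lec S S' : left_shift S S' -> lec S S' /\ S' != S.
Proof.
move=> [T [H1 H2]]; have [L1 N1] := dls_lec H1; have L2 := conn_l H2.
split; first exact: lec_trans L1 L2.
apply/eqP => E; move: L2; rewrite E => L2; move/eqP: N1; apply; exact: lec_anti.
Qed.

Lemma desir_lec (i j : 'I_n) S : i <= j -> S \subset ~: [set i; j] ->
  lec (j |: S) (i |: S).
Proof.
move=> ij /subsetP H k _.
have Hi : i \notin S by apply/negP => /H; rewrite !inE eqxx.
have Hj : j \notin S by apply/negP => /H; rewrite !inE eqxx orbT.
rewrite !cntU1 //; lia.
Qed.

Lemma cnt_const S a b : a <= b -> (forall j, a <= j < b -> ms S j = false) ->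
  cnt S b = cnt S a.
Proof.
elim: b => [|b IH]; first by rewrite leqn0 => /eqP ->.
rewrite leq_eqVlt => /orP[/eqP -> //|Hab] H.
rewrite cntS H ?IH //; first lia.
  by move=> j /andP[h1 h2]; apply: H; rewrite h1 /=; lia.
by rewrite -ltnS Hab leqnn.
Qed.

Lemma cnt_pos S k : 0 < cnt S k -> exists j, j < k /\ ms S j.
Proof.
elim: k => //= k IH; case E: (ms S k) => /=; first by move=> _; exists k.
rewrite addn0 => /IH [j [h1 h2]]; exists j; split => //; lia.
Qed.

Lemma ms_lt S j : ms S j -> j < n.
Proof. by case: (ltnP j n) => // h; rewrite ms_ge. Qed.

Lemma cover_lem g S : lec g S -> g != S ->
  exists T, lec g T /\ (T \proper S \/ direct_right_shift S T).
Proof.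
move=> L N.
have Ln := L n (leqnn n).
case: (ltnP (cnt g n) (cnt S n)) => Hn.
- have [j [/andP[jn /eqP Ej] Mj]] := @maxP (fun j => (j <= n) && (cnt g j == cnt S j)) n
     (ex_intro _ 0 (eqxx 0)) (fun i h => proj1 (andP h)).
  have jn' : j < n.
    rewrite ltn_neqAle jn andbT; apply/negP => /eqP E; rewrite E in Ej; lia.
  have Hj1 : cnt g j.+1 < cnt S j.+1.
    have := L j.+1 jn'; rewrite leq_eqVlt => /orP[/eqP E|//].
    have := Mj j.+1; rewrite jn' E eqxx => /(_ isT); lia.
  have JS : Ordinal jn' \in S.
    rewrite -ms_ord /=; case E: (ms S j) => //; move: Hj1; rewrite !cntS E.
    have := cnt_lip g j; lia.
  exists (S :\ Ordinal jn'); split; last by left; exact: properD1.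
  move=> k Hk; have := cntD1 k JS; rewrite /=.
  case: (leqP k j) => hk.
    rewrite /= addn0 => <-; exact: L.
  rewrite /= addn1 => E.
  have : cnt g k != cnt S k.
    apply/negP => /eqP E2; have := Mj k; rewrite Hk E2 eqxx => /(_ isT); lia.
  move=> NE; have : cnt g k < cnt S k by rewrite ltn_neqAle NE L.
  by rewrite E ltnS.
- have Ln' : cnt g n = cnt S n by apply/eqP; rewrite eqn_leq Ln Hn.
  case: (boolP [exists k : 'I_n.+1, cnt g k < cnt S k]) => [/existsP[k0 Hk0]|NE]; last first.
    move/eqP: N; case; apply: cnt_ext => k Hk; apply/eqP; rewrite eqn_leq L //=.
    move/existsPn: NE => /(_ (Ordinal (n:=n.+1) (m:=k) Hk)) /=; rewrite -leqNgt //.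
  have ex0 : exists k, (k <= n) && (cnt g k < cnt S k).
    by exists k0; rewrite -ltnS ltn_ord Hk0.
  have [k [/andP[kn Hk] Mk]] := @maxP (fun k => (k <= n) && (cnt g k < cnt S k)) n
     ex0 (fun i h => proj1 (andP h)).
  have kn' : k < n.
    rewrite ltn_neqAle kn andbT; apply/negP => /eqP E; rewrite E in Hk; lia.
  have Ek1 : cnt g k.+1 = cnt S k.+1.
    apply/eqP; rewrite eqn_leq L //=; rewrite leqNgt; apply/negP => h.
    have := Mk k.+1; rewrite kn' h => /(_ isT); lia.
  have Msk : ms S k = false.
    case E: (ms S k) => //; move: Ek1; rewrite !cntS E; have := cnt_lip g k; lia.
  have [j0 [j0k Hj0]] : exists j, j < k /\ ms S j.
    apply: cnt_pos; lia.
  have [j [/andP[jk Hj] Mj]] := @maxP (fun j => (j < k) && ms S j) k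
     (ex_intro _ j0 (introT andP (conj j0k Hj0))) (fun i h => ltnW (proj1 (andP h))).
  have jn : j < n by lia.
  have j1n : j.+1 < n by lia.
  have Hj1 : ms S j.+1 = false.
    case: (ltnP j.+1 k) => h; last by have -> : j.+1 = k by lia.
    apply/negbTE/negP => h2; have := Mj j.+1; rewrite h h2 => /(_ isT); lia.
  have Cst : cnt S k = cnt S j.+1.
    apply: cnt_const => // j' /andP[h1 h2]; apply/negbTE/negP => h3.
    have := Mj j'; rewrite h2 h3 => /(_ isT); lia.
  have JS : Ordinal jn \in S by rewrite -ms_ord.
  have J1S : Ordinal j1n \notin S by rewrite -ms_ord /= Hj1.
  exists (Ordinal j1n |: (S :\ Ordinal jn)); split; last first.
    right; apply/existsP; exists (Ordinal jn); apply/existsP; exists (Ordinal j1n).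
    by rewrite /= eqxx JS J1S eqxx.
  move=> k' Hk'.
  have E1 := cntD1 k' JS.
  rewrite cntU1; last by rewrite in_setD1 negb_and J1S orbT.
  rewrite /= in E1 *.
  case: (ltngtP k' j.+1) => h.
  - have hj : (j < k') = false by rewrite ltnNge -ltnS h.
    rewrite hj addn0 in E1; rewrite /= addn0 -E1; exact: L.
  - have hj : (j < k') = true by apply: ltn_trans h.
    rewrite hj in E1; rewrite -E1; exact: L.
  - subst k'; rewrite ltnSn in E1.
    move: E1; set X := cnt (S :\ Ordinal jn) j.+1 => E1.
    have -> : X + false = X by rewrite addn0.
    have E2 : cnt S j.+1 = X.+1 by rewrite E1 addn1.
    have := L k kn; have := cnt_mono g jk; lia.
Qed.
End Shift.


Section Games.
Variable n : nat.
Implicit Types S T g : {set 'I_n}.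
Implicit Types A : {set {set 'I_n}}.

Lemma drsC S T' : direct_right_shift (~: S) T' -> direct_left_shift S (~: T').
Proof.
move=> /existsP[m /existsP[m' /and4P[/eqP E Hm Hm' /eqP ->]]].
apply/existsP; exists m'; apply/existsP; exists m.
rewrite inE in Hm; rewrite inE negbK in Hm'.
have Hne : m != m'. by apply/negP => /eqP Em; move: E; rewrite Em; lia.
rewrite E eqxx Hm' Hm /=; apply/eqP/setP => x; rewrite !inE.
case: (eqVneq x m) => [->|xm]; first by rewrite (negbTE Hne) Hm.
case: (eqVneq x m') => [->|xm'] /=; first by [].
by rewrite negbK.
Qed.

Definition lecb S T := [forall k : 'I_n.+1, cnt S k <= cnt T k].
Lemma lecbP S T : reflect (lec S T) (lecb S T).
Proof.
apply: (iffP forallP) => [H k Hk|H k]; last by apply: H; rewrite -ltnS.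
by have := H (Ordinal (n:=n.+1) (m:=k) Hk).
Qed.

Definition vup A S := [exists g in A, lecb g S].
Definition vdown A S := ~~ [exists g in A, lecb S (~: g)].

Lemma vupP A S : reflect (exists2 g, g \in A & lec g S) (vup A S).
Proof.
apply: (iffP existsP) => [[g /andP[h1 /lecbP h2]]|[g h1 h2]]; exists g => //.
by rewrite h1; apply/lecbP.
Qed.

Lemma vdownP A S : reflect (exists2 g, g \in A & lec S (~: g)) (~~ vdown A S).
Proof.
rewrite negbK; apply: (iffP existsP) => [[g /andP[h1 /lecbP h2]]|[g h1 h2]]; exists g => //.
by rewrite h1; apply/lecbP.
Qed.

Lemma bleq (a b : bool) : (a -> b) -> a <= b.
Proof. by case: a; case: b => // /(_ isT). Qed.

Lemma vup_clg A : canonical_linear_game (vup A).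
Proof.
split.
  move=> S T H; apply: bleq => /vupP[g g1 g2]; apply/vupP; exists g => //.
  exact: lec_trans g2 (lec_sub H).
move=> i j ij S H; apply: bleq => /vupP[g g1 g2]; apply/vupP; exists g => //.
exact: lec_trans g2 (desir_lec ij H).
Qed.

Lemma vdown_clg A : canonical_linear_game (vdown A).
Proof.
split.
  move=> S T H; apply: bleq; apply: contraLR => /vdownP[g g1 g2].
  apply/vdownP; exists g => //; exact: lec_trans (lec_sub H) g2.
move=> i j ij S H; apply: bleq; apply: contraLR => /vdownP[g g1 g2].
apply/vdownP; exists g => //; exact: lec_trans (desir_lec ij H) g2.
Qed.

Lemma roof_vup A S : roof (vup A) S -> S \in A.
Proof.
move=> [[/vupP[g gA gS] minS] rs].
case: (eqVneq g S) => [<- //|N].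
have [T [gT [P|D]]] := cover_lem gS N.
  by case/negP: (minS T P); apply/vupP; exists g.
have : right_shift S T by exists T; split => //; exact: connect0.
by move/rs => /negP H; exfalso; apply: H; apply/vupP; exists g.
Qed.

Lemma ceil_vdown A S : ceiling (vdown A) S -> ~: S \in A.
Proof.
move=> [[/vdownP[g gA gS] maxS] ls].
have gS' : lec g (~: S) by have := lecC gS; rewrite setCK.
case: (eqVneq g (~: S)) => [<- //|N].
have [T' [gT [P|D]]] := cover_lem gS' N.
  have : S \proper ~: T' by rewrite -properC setCK.
  move/maxS => H; have : ~~ vdown A (~: T') by apply/vdownP; exists g => //; exact: lecC.
  by rewrite H.
have : left_shift S (~: T') by exists (~: T'); split; [exact: drsC | exact: connect0].
move/ls => H; have : ~~ vdown A (~: T') by apply/vdownP; exists g => //; exact: lecC.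
by rewrite H.
Qed.

Lemma ceil_vup A C : (forall g, g \in A -> ~ lec g C) ->
  (forall T, lec C T -> T != C -> exists2 g, g \in A & lec g T) -> ceiling (vup A) C.
Proof.
move=> Ha Hb; split; first split.
- by apply/negP => /vupP[g g1 g2]; exact: Ha g1 g2.
- move=> T P; apply/vupP; apply: Hb; first by apply: lec_sub; exact: proper_sub P.
  by apply/eqP => E; move: P; rewrite E properxx.
- move=> S' /ls_lec[h1 h2]; apply/vupP; exact: Hb.
Qed.

Lemma roof_vdown A C : (forall g, g \in A -> ~ lec g C) ->
  (forall T, lec C T -> T != C -> exists2 g, g \in A & lec g T) -> roof (vdown A) (~: C).
Proof.
move=> Ha Hb.
have key : forall T, lec T (~: C) -> T != ~: C -> ~~ vdown A T.
  move=> T h1 h2; apply/vdownP.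
  have h3 : lec C (~: T) by have := lecC h1; rewrite setCK.
  have h4 : ~: T != C by apply/eqP => E; move/eqP: h2; apply; rewrite -E setCK.
  have [g g1 g2] := Hb _ h3 h4; exists g => //; have := lecC g2; by rewrite setCK.
split; first split.
- apply: contraT => /vdownP[g g1 g2]; exfalso; apply: (Ha g g1); have := lecC g2; by rewrite !setCK.
- move=> T P; apply: key; first by apply: lec_sub; exact: proper_sub P.
  by apply/eqP => E; move: P; rewrite E properxx.
- move=> S' /rs_lec[h1 h2]; exact: key.
Qed.

End Games.


Section Constr.
Variable p : nat.
Local Notation n := (4 * p).

Definition pset (P : nat -> bool) : {set 'I_n} := [set i : 'I_n | P i].

Lemma ms_pset P j : ms (pset P) j = (j < n) && P j.
Proof.
case: (ltnP j n) => h /=; last by rewrite ms_ge.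
by rewrite -[j]/(nat_of_ord (Ordinal h)) ms_ord inE.
Qed.

Lemma cnt_odd P b : 2*b+1 <= n -> cnt (pset P) (2*b+1) = cnt (pset P) (2*b) + P (2*b).
Proof. move=> h; rewrite addn1 cntS ms_pset; have -> : 2*b < n by lia. by []. Qed.

Lemma cnt_even P b : 2*b+2 <= n ->
  cnt (pset P) (2*b.+1) = cnt (pset P) (2*b) + P (2*b) + P (2*b+1).
Proof.
move=> h; have -> : 2 * b.+1 = (2*b+1).+1 by lia.
rewrite cntS cnt_odd ?ms_pset; last by lia.
by have -> : 2*b+1 < n by lia.
Qed.

Lemma d2e b : (2*b) %/ 2 = b. Proof. lia. Qed.
Lemma m2e b : (2*b) %% 2 = 0. Proof. lia. Qed.
Lemma d2o b : (2*b+1) %/ 2 = b. Proof. lia. Qed.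
Lemma m2o b : (2*b+1) %% 2 = 1. Proof. lia. Qed.

Definition blk (L : nat -> bool) (j : nat) : bool :=
  if j %% 2 == 0 then L (j %/ 2) else ~~ L (j %/ 2).

Lemma blk_e L b : blk L (2*b) = L b. Proof. by rewrite /blk m2e d2e. Qed.
Lemma blk_o L b : blk L (2*b+1) = ~~ L b. Proof. by rewrite /blk m2o d2o. Qed.

Lemma cnt_blk_e L b : 2*b <= n -> cnt (pset (blk L)) (2*b) = b.
Proof.
elim: b => [|b IH] h; first by rewrite muln0.
rewrite cnt_even; last by lia.
rewrite IH; last by lia.
by rewrite blk_e blk_o; case: (L b) => /=; lia.
Qed.

Lemma cnt_blk_o L b : 2*b+1 <= n -> cnt (pset (blk L)) (2*b+1) = b + L b.
Proof. move=> h; rewrite cnt_odd // cnt_blk_e ?blk_e //; lia. Qed.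

Definition hP (b0 : nat) (j : nat) : bool :=
  (j %/ 2 == b0) || ((j %/ 2 != b0.+1) && (j %% 2 == 1)).

Lemma cnt_h_e b0 b : 2*b <= n -> cnt (pset (hP b0)) (2*b) = b + (b == b0.+1).
Proof.
elim: b => [|b IH] h; first by rewrite muln0.
rewrite cnt_even; last by lia.
rewrite IH; last by lia.
rewrite /hP d2e d2o m2e m2o /= andbT.
case: (eqVneq b b0) => [->|n1]; first by rewrite (ltn_eqF (ltnSn b0)) eqxx /=; lia.
case: (eqVneq b b0.+1) => [->|n2] /=.
  by rewrite eqSS (gtn_eqF (ltnSn b0)) /= ?addn0; lia.
by rewrite eqSS (negbTE n1) /=; lia.
Qed.

Lemma cnt_h_o b0 b : 2*b+1 <= n ->
  cnt (pset (hP b0)) (2*b+1) = b + (b == b0.+1) + (b == b0).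
Proof.
move=> h; rewrite cnt_odd // cnt_h_e; last by lia.
by rewrite /hP d2e m2e /= ?andbF ?orbF.
Qed.

End Constr.


Section Constr2.
Variable p : nat.
Local Notation n := (4 * p).

Definition xb (y : nat -> bool) b := if b %% 2 == 1 then y (b %/ 2) else ~~ y (b %/ 2).
Definition yt (t : p.-tuple bool) (i : nat) := nth false t i.
Definition Cy (t : p.-tuple bool) : {set 'I_n} := pset p (blk (xb (yt t))).
Definition Gs (i : nat) : {set 'I_n} := pset p (blk (fun b => b %/ 2 == i)).
Definition Hs (b0 : nat) : {set 'I_n} := pset p (hP b0).
Definition Aset : {set {set 'I_n}} :=
  [set Gs (val i) | i : 'I_p] :|: [set Hs (val b) | b : 'I_(2*p)].

Lemma xb_partner y b b' : b' %/ 2 = b %/ 2 -> b' != b -> xb y b' = ~~ xb y b.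
Proof.
move=> E /eqP N; rewrite /xb E.
case: (eqVneq (b %% 2) 1) => h1; case: (eqVneq (b' %% 2) 1) => h2 //=; try lia.
all: by rewrite ?negbK.
Qed.

Lemma A_not_below t g : g \in Aset -> ~ lec g (Cy t).
Proof.
case/setUP => /imsetP[i _ ->] L.
- have [b [Eb xbF]] : exists b, b %/ 2 = i /\ xb (yt t) b = false.
    case E: (yt t i).
      by exists (2*i); rewrite /xb m2e d2e E; split.
    by exists (2*i+1); rewrite /xb m2o d2o E; split.
  have hi := ltn_ord i.
  have hb : 2*b+1 <= n by lia.
  have := L _ hb; rewrite /Gs /Cy !cnt_blk_o // Eb eqxx xbF; lia.
- have hi := ltn_ord i.
  have hb : 2*(i.+1) <= n by lia.
  have := L _ hb; rewrite /Hs cnt_h_e // /Cy cnt_blk_e // eqxx; lia.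
Qed.

Lemma hcase t T b : b < 2*p -> lec (Cy t) T -> b.+2 <= cnt T (2*b+2) -> lec (Hs b) T.
Proof.
move=> hb L HT k hk.
have [b' [E|E]] : exists b', k = 2*b' \/ k = 2*b'+1 by exists (k %/ 2); lia.
- subst k; rewrite /Hs cnt_h_e //; have := L _ hk; rewrite /Cy cnt_blk_e //.
  case: (eqVneq b' b.+1) => [E|NE] /=; last by lia.
  subst b'; have -> : 2 * b.+1 = 2*b+2 by lia. lia.
- subst k; rewrite /Hs cnt_h_o //; have := L _ hk; rewrite /Cy cnt_blk_o //.
  case: (eqVneq b' b) => [E|NE1] /=.
    subst b'; rewrite (ltn_eqF (ltnSn b)) /=.
    have := cnt_lip T (2*b+1); have -> : (2*b+1).+1 = 2*b+2 by lia.
    lia.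
  case: (eqVneq b' b.+1) => [E|NE2] /=; last by lia.
  subst b'; have := cnt_mono T (k:=2*b+2) (k':=2*b.+1+1) (ltac:(lia)); lia.
Qed.

Lemma gcase t T b : b < 2*p -> lec (Cy t) T -> xb (yt t) b = false ->
  b.+1 <= cnt T (2*b+1) -> lec (Gs (b %/ 2)) T.
Proof.
move=> hb L xF HT k hk.
have [b' [E|E]] : exists b', k = 2*b' \/ k = 2*b'+1 by exists (k %/ 2); lia.
- subst k; rewrite /Gs cnt_blk_e //; have := L _ hk; rewrite /Cy cnt_blk_e //.
- subst k; rewrite /Gs cnt_blk_o //; have := L _ hk; rewrite /Cy cnt_blk_o //.
  case: (eqVneq (b' %/ 2) (b %/ 2)) => [E|NE] /=; last by lia.
  case: (eqVneq b' b) => [E2|NE2]; first by subst; lia.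
  rewrite (xb_partner _ E NE2) xF /=; lia.
Qed.

Lemma above_wins t T : lec (Cy t) T -> T != Cy t -> exists2 g, g \in Aset & lec g T.
Proof.
move=> L N.
case: (boolP [exists k : 'I_n.+1, cnt (Cy t) k < cnt T k]) => [/existsP[k0 Hk0]|NE]; last first.
  move/eqP: N; case; apply: cnt_ext => k Hk; apply/eqP; rewrite eqn_leq (L k Hk) andbT.
  move/existsPn: NE => /(_ (Ordinal (n:=n.+1) (m:=k) Hk)) /=; rewrite -leqNgt //.
have hk0 : k0 <= n by rewrite -ltnS ltn_ord.
move: Hk0; set k := nat_of_ord k0 => Hk0.
have k0pos : 0 < k by case: (posnP k) => // E; move: Hk0; rewrite E.
have [b [E|E]] : exists b, k = 2*b+2 \/ k = 2*b+1 by exists ((k - 1) %/ 2); lia.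
- have hb : b < 2 * p by lia.
  exists (Hs b); first by apply/setUP; right; apply/imsetP; exists (Ordinal hb).
  apply: hcase hb L _; move: Hk0; rewrite E.
  have -> : 2*b+2 = 2 * b.+1 by lia.
  rewrite /Cy cnt_blk_e; lia.
- have hb : b < 2 * p by lia.
  move: Hk0; rewrite E /Cy cnt_blk_o; last by lia.
  case xE: (xb (yt t) b) => Hk.
    exists (Hs b); first by apply/setUP; right; apply/imsetP; exists (Ordinal hb).
    apply: hcase hb L _.
    have := cnt_mono T (k:=2*b+1) (k':=2*b+2) (ltac:(lia)); lia.
  have hi : b %/ 2 < p by lia.
  exists (Gs (b %/ 2)); first by apply/setUP; left; apply/imsetP; exists (Ordinal hi).
  apply: gcase hb L xE _; lia.
Qed.

Lemma Cy_inj : injective Cy.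
Proof.
move=> t1 t2 E; apply: val_inj; apply: (@eq_from_nth _ false); first by rewrite !size_tuple.
move=> j; rewrite size_tuple => hj.
have h4 : 4 * j < n by lia.
have : Ordinal h4 \in Cy t1 = (Ordinal h4 \in Cy t2) by rewrite E.
rewrite /Cy /pset !inE /=.
have -> : 4 * j = 2 * (2 * j) by lia.
rewrite !blk_e /xb m2e d2e /=.
by rewrite /yt; case: (nth false t1 j); case: (nth false t2 j).
Qed.

Lemma card_Aset : #|Aset| <= 3 * p.
Proof.
rewrite /Aset; apply: leq_trans (leq_card_setU _ _) _.
have -> : 3 * p = p + 2 * p by lia.
apply: leq_add.
  apply: leq_trans (leq_imset_card _ _) _; apply: leq_trans (max_card _) _; by rewrite card_ord.
apply: leq_trans (leq_imset_card _ _) _; apply: leq_trans (max_card _) _; by rewrite card_ord.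
Qed.

End Constr2.


Section TMb.
Variables q k : nat.
Variable delta : tm_delta q k.

Definition tape (cf : config q k) := let: (_, l, c, r) := cf in size l + size r + 1.

Lemma step_tape cf cf' : tm_step delta cf = Some cf' -> tape cf' <= tape cf + 1.
Proof.
case: cf => [[[st l] c] r] /=; case: (delta st c) => [[[st' w] mv]|] //= [<-].
case: mv => /=; [case: r | case: l] => /= *; lia.
Qed.

Lemma run_tape f cf cf' : tm_run delta f cf = Some cf' -> tape cf' <= tape cf + f.
Proof.
elim: f cf => //= f IH cf; case E: (tm_step delta cf) => [cf1|].
  move/IH; have := step_tape E; lia.
move=> [<-]; lia.
Qed.

Lemma out_size cf : size (tm_output cf) <= tape cf.
Proof.
case: cf => [[[st l] c] r] /=; rewrite /strip_blanks /drop_blanks size_rev size_drop size_rev size_drop.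
rewrite size_cat size_rev /=; lia.
Qed.

Lemma init_tape w : tape (tm_init q w) <= size w + 1.
Proof. case: w => //= a w; rewrite size_behead /=; lia. Qed.

End TMb.

Lemma size_enc_set k n (X : {set 'I_n}) : size (enc_set k X) = n.+1.
Proof. by rewrite /enc_set size_cat size_map size_enum_ord addn1. Qed.

Lemma size_enc_list k n (s : seq {set 'I_n}) : size (enc_list k s) = size s * n.+1.
Proof. elim: s => //= X s IH; rewrite /enc_list /= size_cat size_enc_set -/(enc_list k s) IH; lia. Qed.

Lemma size_enc_input k n (s : seq {set 'I_n}) : size (enc_input k s) = n.+1 + size s * n.+1.
Proof. by rewrite /enc_input size_cat size_nseq /= size_enc_list; lia. Qed.

Lemma exists_list (T : eqType) (P : T -> Prop) (l : seq T) :
  exists s, uniq s /\ (forall x, x \in s <-> (P x /\ x \in l)) /\ size s <= size l.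
Proof.
elim: l => [|a l [s [us [ss sz]]]]; first by exists [::]; split => //; split => // x; split => // [[]].
case: (classic (P a)) => Pa; last first.
  exists s; split => //; split => [x|/=]; last by lia.
  split => [/ss [h1 h2]|[h1]]; first by rewrite in_cons h2 orbT.
  rewrite in_cons => /orP[/eqP E|h2]; [by subst | by apply/ss].
case: (boolP (a \in s)) => ain.
  exists s; split => //; split => [x|/=]; last by lia.
  split => [/ss [h1 h2]|[h1]]; first by rewrite in_cons h2 orbT.
  rewrite in_cons => /orP[/eqP E|h2]; [by subst | by apply/ss].
exists (a :: s); split; first by rewrite /= ain.
split => [x|/=]; last by lia.
rewrite !in_cons; split => [/orP[/eqP ->|/ss [h1 h2]]|[h1 /orP[/eqP ->|h2]]].
- by rewrite eqxx.
- by rewrite h2 orbT.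
- by rewrite eqxx.
- by apply/orP; right; apply/ss.
Qed.

Lemma expn_mono a b d : a <= b -> a ^ d <= b ^ d.
Proof. move=> h; elim: d => // d IH; rewrite !expnS; exact: leq_mul. Qed.

Lemma exp_beats C D : exists p, C * (p.+1) ^ D < 2 ^ p.
Proof.
set K := C + 2 * D + 1.
have hK : K < 2 ^ K by apply: ltn_expl.
set k := 2 * K.
exists (2 ^ k).-1.
have pos : 0 < 2 ^ k by rewrite expn_gt0.
rewrite prednK // -expnM.
have hC : C < 2 ^ C by apply: ltn_expl.
have h1 : C * 2 ^ (k * D) < 2 ^ C * 2 ^ (k * D) by rewrite ltn_pmul2r ?expn_gt0.
apply: leq_trans h1 _; rewrite -expnD leq_exp2l //.
have : 2 ^ k = 2 ^ K * 2 ^ K by rewrite /k mul2n -addnn expnD.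
move: hK; set X := 2 ^ K => hK E.
rewrite -ltnS prednK // E /k; nia.
Qed.


Lemma no_poly (inP outP : forall n, ({set 'I_n} -> bool) -> {set 'I_n} -> Prop) :
  (forall p, exists v : {set 'I_(4*p)} -> bool, canonical_linear_game v /\
     (exists A : {set {set 'I_(4*p)}}, #|A| <= 3*p /\ forall X, inP _ v X -> X \in A) /\
     (exists O : {set {set 'I_(4*p)}}, 2^p <= #|O| /\ forall X, X \in O -> outP _ v X)) ->
  ~ exists q k (delta : tm_delta q k) c d, poly_time_converts inP outP delta c d.
Proof.
move=> H [q [k [delta [c [d P]]]]].
have [p hp] := exp_beats (14 + c * 12 ^ d) (2 * d + 2).
have [v [cv [[A [cA inA]] [O [cO outO]]]]] := H p.
have [s [us [ss sz]]] := exists_list (inP _ v) (enum A).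
have ss' : forall X, X \in s <-> inP _ v X.
  move=> X; rewrite ss; split => [[]//|h]; split => //; rewrite mem_enum; exact: inA.
have [t [ht [cf [run [s' [us' [ss2 out]]]]]]] := P _ v cv s us ss'.
have hs' : #|O| <= size s'.
  rewrite cardE; apply: uniq_leq_size; first exact: enum_uniq.
  move=> X; rewrite mem_enum => /outO h; exact: (proj2 (ss2 X) h).
have hsz : size s <= 3 * p by apply: leq_trans _ cA; rewrite cardE.
have h1 := out_size cf; rewrite out size_enc_list in h1.
have h2 := run_tape run.
have h3 := init_tape q (enc_input k s).
rewrite size_enc_input in h3 ht.
set W := (4 * p).+1 + size s * (4 * p).+1 in h3 ht.
have hW : W.+1 <= 12 * (p.+1) ^ 2 by rewrite /W; nia.
have hexp : W.+1 ^ d <= 12 ^ d * (p.+1) ^ (2 * d).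
  by rewrite expnM -expnMn; apply: expn_mono.
have hY1 : (p.+1) ^ (2 * d) <= (p.+1) ^ (2 * d + 2) by apply: leq_pexp2l => //; lia.
have hY2 : (p.+1) ^ 2 <= (p.+1) ^ (2 * d + 2) by apply: leq_pexp2l => //; lia.
move: hp; set Z := (p.+1) ^ (2 * d + 2) => hp.
move: hexp hY1; set Z2 := (p.+1) ^ (2 * d) => hexp hY1.
have hct : t <= c * (12 ^ d * Z).
  apply: leq_trans ht _; apply: leq_mul => //; apply: leq_trans hexp _; exact: leq_mul.
move: hct hY2 hW; set Y := (p.+1) ^ 2 => hct hY2 hW.
move: hs' cO; set E := 2 ^ p => hs' cO.
have : E * (4 * p).+1 <= size s' * (4 * p).+1 by apply: leq_mul => //; exact: leq_trans cO hs'.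
nia.
Qed.


Theorem corollary4 :
  (~ exists (q k : nat) (delta : tm_delta q k) (c d : nat),
       poly_time_converts (@ceiling) (@roof) delta c d) /\
  (~ exists (q k : nat) (delta : tm_delta q k) (c d : nat),
       poly_time_converts (@roof) (@ceiling) delta c d).
Proof.
split; apply: no_poly => p.
- exists (vdown (Aset p)); split; first exact: vdown_clg.
  split.
    exists [set ~: Y | Y in Aset p]; split.
      apply: leq_trans (leq_imset_card _ _) _; exact: card_Aset.
    move=> X /ceil_vdown h; apply/imsetP; exists (~: X) => //; by rewrite setCK.
  exists [set ~: Cy t | t in [set: p.-tuple bool]]; split.
    rewrite card_imset; first by rewrite cardsT card_tuple card_bool.
    by move=> t1 t2 /setC_inj /Cy_inj.
  move=> X /imsetP[t _ ->]; apply: roof_vdown.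
    by move=> g; apply: A_not_below.
  by move=> T; apply: above_wins.
- exists (vup (Aset p)); split; first exact: vup_clg.
  split.
    exists (Aset p); split; first exact: card_Aset.
    by move=> X /roof_vup.
  exists [set Cy t | t in [set: p.-tuple bool]]; split.
    rewrite card_imset; first by rewrite cardsT card_tuple card_bool.
    exact: Cy_inj.
  move=> X /imsetP[t _ ->]; apply: ceil_vup.
    by move=> g; apply: A_not_below.
  by move=> T; apply: above_wins.
Qed.
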